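(* Let $X\in\mathbb{R}^{n\times p}$, $B^*\in\mathbb{R}^{p\times q}$, $E\in\mathbb{R}^{n\times q}$ and $Y=XB^*+E$. Let $f:\mathbb{R}^{n\times q}\to\mathbb{R}$ be a convex function, $\lambda>0$, and let $\hat B$ be a minimizer over $B\in\mathbb{R}^{p\times q}$ of $f(Y-XB)+\lambda\|B\|_{2,1}$. Let $\Delta=\hat B-B^*$ and $\mathcal S^*=\{j\in[p]:\|B^*_{j:}\|_2\ne0\}$. Assume there exists $Z\in\partial f(E)$ with $\|X^\top Z\|_{2,\infty}\le\lambda/2$. Then: (i) $\|\Delta_{\mathcal S^{*c}}\|_{2,1}\le3\|\Delta_{\mathcal S^*}\|_{2,1}$; (ii) if moreover $\Psi=\frac1nX^\top X$ satisfies $\Psi_{jj}=1$ and $\max_{j'\ne j}|\Psi_{jj'}|\le\frac{1}{7\alpha s}$ for all $j\in[p]$, for some integer $s\ge1$ with $|\mathcal S^*|\le s$ and some $\alpha>1$, then $$\|\Delta\|_{2,\infty}\le\Big(1+\frac{16}{7(\alpha-1)}\Big)\|\Psi\Delta\|_{2,\infty}.$$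
   Context: $M_{j:}$ is the $j$-th row of $M$; $\|M\|_{2,1}=\sum_j\|M_{j:}\|_2$, $\|M\|_{2,\infty}=\max_j\|M_{j:}\|_2$. For $\mathcal S\subset[p]$, $M_{\mathcal S}$ denotes the matrix equal to $M$ on the rows indexed by $\mathcal S$ and zero on the other rows; $\mathcal S^{*c}=[p]\setminus\mathcal S^*$. $\partial f$ is the convex subdifferential, with the inner product $\langle A,B\rangle=\operatorname{Tr}(A^\top B)$. *)

(* Defs.v *)
From HB Require Import structures.
From mathcomp Require Import all_boot all_order all_algebra.
From mathcomp Require Import reals.
Set Implicit Arguments. Unset Strict Implicit. Unset Printing Implicit Defensive.
Import Order.TTheory GRing.Theory Num.Theory.
Local Open Scope ring_scope.

Definition rownorm (R : realType) (m q : nat) (M : 'M[R]_(m, q)) (j : 'I_m) : R :=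
  Num.sqrt (\sum_(k < q) M j k ^+ 2).

Definition norm21 (R : realType) (m q : nat) (M : 'M[R]_(m, q)) : R :=
  \sum_(j < m) rownorm M j.

Definition norm2inf (R : realType) (m q : nat) (M : 'M[R]_(m, q)) : R :=
  \big[Num.max/0]_(j < m) rownorm M j.

Definition rowrestr (R : realType) (m q : nat) (S : {set 'I_m}) (M : 'M[R]_(m, q))
  : 'M[R]_(m, q) := \matrix_(j, k) (if j \in S then M j k else 0).

Definition convex_fun (R : realType) (n q : nat) (f : 'M[R]_(n, q) -> R) : Prop :=
  forall (A B : 'M[R]_(n, q)) (t : R), 0 <= t -> t <= 1 ->
    f (t *: A + (1 - t) *: B) <= t * f A + (1 - t) * f B.

Definition subdiff (R : realType) (n q : nat) (f : 'M[R]_(n, q) -> R)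
  (E Z : 'M[R]_(n, q)) : Prop :=
  forall A : 'M[R]_(n, q), f E + \tr (Z^T *m (A - E)) <= f A.

Definition row_support (R : realType) (p q : nat) (B : 'M[R]_(p, q)) : {set 'I_p} :=
  [set j | rownorm B j != 0].

(* Main.v *)
Require Import Defs.
From mathcomp Require Import all_boot all_order all_algebra.
From mathcomp Require Import reals.
From mathcomp Require Import ring lra.
Import Order.TTheory GRing.Theory Num.Theory.
Local Open Scope ring_scope.
Set Implicit Arguments. Unset Strict Implicit.

Section Aux.
Variables (R : realType) (q : nat).
Implicit Types u v w : 'I_q -> R.

Definition ip u v := \sum_(k < q) u k * v k.
Definition rn u := Num.sqrt (\sum_(k < q) u k ^+ 2).

Lemma CS u v : ip u v ^+ 2 <= (\sum_k u k ^+ 2) * (\sum_k v k ^+ 2).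
Proof.
have e1 : (\sum_k u k ^+ 2) * (\sum_k v k ^+ 2) =
   \sum_i \sum_j (u i ^+ 2 * v j ^+ 2).
  by rewrite mulr_suml; apply: eq_bigr => i _; rewrite mulr_sumr.
have e2 : (\sum_k u k ^+ 2) * (\sum_k v k ^+ 2) =
   \sum_i \sum_j (u j ^+ 2 * v i ^+ 2).
  by rewrite e1 exchange_big.
have e3 : ip u v ^+ 2 = \sum_i \sum_j (u i * v i * (u j * v j)).
  by rewrite expr2 /ip mulr_suml; apply: eq_bigr => i _; rewrite mulr_sumr.
have h0 : 0 <= \sum_i \sum_j (u i * v j - u j * v i) ^+ 2.
  by apply: sumr_ge0 => i _; apply: sumr_ge0 => j _; apply: sqr_ge0.
have e4 : \sum_i \sum_j (u i * v j - u j * v i) ^+ 2 =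
  \sum_i \sum_j (u i ^+ 2 * v j ^+ 2) + \sum_i \sum_j (u j ^+ 2 * v i ^+ 2)
  - 2 * \sum_i \sum_j (u i * v i * (u j * v j)).
  rewrite mulr_sumr -big_split -sumrB /=; apply: eq_bigr => i _.
  rewrite mulr_sumr -big_split -sumrB /=; apply: eq_bigr => j _.
  ring.
rewrite e4 -e1 -e2 -e3 in h0.
lra.
Qed.

Lemma rn_ge0 u : 0 <= rn u.
Proof. exact: sqrtr_ge0. Qed.

Lemma rn_sq u : rn u ^+ 2 = \sum_k u k ^+ 2.
Proof. by rewrite sqr_sqrtr // sumr_ge0 // => k _; apply: sqr_ge0. Qed.

Lemma ip_abs u v : `|ip u v| <= rn u * rn v.
Proof.
rewrite -sqrtr_sqr /rn -sqrtrM; last by apply: sumr_ge0 => k _; apply: sqr_ge0.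
rewrite ler_sqrt; first exact: CS.
by apply: mulr_ge0; apply: sumr_ge0 => k _; apply: sqr_ge0.
Qed.

Lemma ip_le u v : ip u v <= rn u * rn v.
Proof. exact: le_trans (ler_norm _) (ip_abs u v). Qed.

Lemma rn_eq u v : (forall k, u k = v k) -> rn u = rn v.
Proof. by move=> h; rewrite /rn; congr Num.sqrt; apply: eq_bigr => k _; rewrite h. Qed.

Lemma rn_add u v w : (forall k, w k = u k + v k) -> rn w <= rn u + rn v.
Proof.
move=> h.
rewrite -[rn u + rn v]ger0_norm ?addr_ge0 ?rn_ge0 // -sqrtr_sqr /rn ler_sqrt ?sqr_ge0 //.
have -> : \sum_k w k ^+ 2 = \sum_k u k ^+ 2 + 2 * ip u v + \sum_k v k ^+ 2.
  rewrite /ip mulr_sumr -!big_split /=; apply: eq_bigr => k _; rewrite h; ring.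
have := ip_le u v; have := rn_sq u; have := rn_sq v. rewrite /rn.
set a := Num.sqrt _; set b := Num.sqrt _ => hb ha hle.
rewrite -ha -hb. nra.
Qed.

Lemma rn_opp u v : (forall k, v k = - u k) -> rn v = rn u.
Proof. by move=> h; rewrite /rn; congr Num.sqrt; apply: eq_bigr => k _; rewrite h sqrrN. Qed.

Lemma rn_eq0 u : rn u = 0 -> forall k, u k = 0.
Proof.
move=> /eqP; rewrite sqrtr_eq0 => hle k.
have h0 : \sum_k u k ^+ 2 = 0.
  by apply/eqP; rewrite eq_le hle sumr_ge0 // => i _; apply: sqr_ge0.
move/eqP: h0; rewrite psumr_eq0; last by move=> i _; apply: sqr_ge0.
by move/allP => /(_ k (mem_index_enum k)) /=; rewrite sqrf_eq0 => /eqP.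
Qed.

End Aux.
Lemma rownorm_restr (R : realType) (m q : nat) (S : {set 'I_m}) (M : 'M[R]_(m, q)) j :
  rownorm (rowrestr S M) j = if j \in S then rownorm M j else 0.
Proof.
rewrite /rownorm; case: ifP => h.
  by congr Num.sqrt; apply: eq_bigr => k _; rewrite mxE h.
rewrite big1 ?sqrtr0 // => k _; rewrite mxE h; ring.
Qed.

Lemma norm2inf_ge0 (R : realType) (m q : nat) (M : 'M[R]_(m, q)) : 0 <= norm2inf M.
Proof.
rewrite /norm2inf; elim/big_ind: _ => //.
  by move=> x y hx hy; rewrite le_max hx.
by move=> i _; apply: sqrtr_ge0.
Qed.

Lemma le_norm2inf (R : realType) (m q : nat) (M : 'M[R]_(m, q)) j :
  rownorm M j <= norm2inf M.
Proof. exact: le_bigmax. Qed.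

Lemma norm2inf_le (R : realType) (m q : nat) (M : 'M[R]_(m, q)) b :
  0 <= b -> (forall j, rownorm M j <= b) -> norm2inf M <= b.
Proof. by move=> h0 h; apply/bigmax_leP; split. Qed.

Lemma trace_ip (R : realType) (p q : nat) (M N : 'M[R]_(p, q)) :
  \tr (M^T *m N) = \sum_j ip (fun k => M j k) (fun k => N j k).
Proof.
rewrite /mxtrace /ip exchange_big /=; apply: eq_bigr => k _.
by rewrite mxE; apply: eq_bigr => j _; rewrite mxE.
Qed.

Lemma norm21_split (R : realType) (m q : nat) (S : {set 'I_m}) (M : 'M[R]_(m, q)) :
  norm21 M = norm21 (rowrestr S M) + norm21 (rowrestr (~: S) M).
Proof.
rewrite /norm21 -big_split /=; apply: eq_bigr => j _.
rewrite !rownorm_restr in_setC; case: (j \in S) => /=; ring.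
Qed.
Unset Implicit Arguments. Set Strict Implicit.
Theorem lemma2 (R : realType) (n p q : nat)
  (X : 'M[R]_(n, p)) (Bstar : 'M[R]_(p, q)) (E : 'M[R]_(n, q))
  (f : 'M[R]_(n, q) -> R) (lam : R) (Bhat : 'M[R]_(p, q)) :
  convex_fun f ->
  0 < lam ->
  (forall B : 'M[R]_(p, q),
     f ((X *m Bstar + E) - X *m Bhat) + lam * norm21 Bhat
     <= f ((X *m Bstar + E) - X *m B) + lam * norm21 B) ->
  (exists Z : 'M[R]_(n, q), subdiff f E Z /\ norm2inf (X^T *m Z) <= lam / 2) ->
  let Delta := Bhat - Bstar in
  let S := row_support Bstar in
  norm21 (rowrestr (~: S) Delta) <= 3 * norm21 (rowrestr S Delta) /\
  (forall (s : nat) (alpha : R),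
     (1 <= s)%N -> (#|S| <= s)%N -> 1 < alpha ->
     let Psi := (n%:R)^-1 *: (X^T *m X) in
     (forall j : 'I_p, Psi j j = 1) ->
     (forall j j' : 'I_p, j' != j -> `|Psi j j'| <= (7 * alpha * s%:R)^-1) ->
     norm2inf Delta <= (1 + 16 / (7 * (alpha - 1))) * norm2inf (Psi *m Delta)).
Proof.
move=> _ lam_gt0 opt [Z [subZ normZ]] Delta S.
set A := X^T *m Z.
set T := \sum_j ip (fun k => A j k) (fun k => Delta j k).
have hDe : forall j k, Delta j k = Bhat j k - Bstar j k by move=> j k; rewrite !mxE.
have key1 : lam * norm21 Bhat - lam * norm21 Bstar <= T.
  have h1 := opt Bstar.
  have eE : X *m Bstar + E - X *m Bstar = E by rewrite addrAC subrr add0r.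
  rewrite eE in h1.
  have h2 := subZ (X *m Bstar + E - X *m Bhat).
  have e : X *m Bstar + E - X *m Bhat - E = - (X *m Delta).
    by rewrite /Delta mulmxBr addrAC addrK opprB.
  rewrite e mulmxN linearN /= mulmxA in h2.
  rewrite (_ : Z^T *m X = (X^T *m Z)^T) ?trace_ip in h2; last by rewrite trmx_mul trmxK.
  rewrite -/A -/T in h2.
  by rewrite -/A in h1; lra.
have key2 : T <= lam / 2 * norm21 Delta.
  rewrite /norm21 mulr_sumr; apply: ler_sum => j _.
  apply: le_trans; first exact: ip_le.
  apply: ler_wpM2r; first exact: rn_ge0.
  apply: le_trans normZ. exact: le_norm2inf.
have key3 : norm21 (rowrestr (~: S) Delta) - norm21 (rowrestr S Delta)
            <= norm21 Bhat - norm21 Bstar.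
  rewrite /norm21 -!sumrB; apply: ler_sum => j _.
  rewrite !rownorm_restr in_setC.
  case hj: (j \in S) => /=.
    have := rn_add (u := fun k => Bhat j k) (v := fun k => - Delta j k)
        (w := fun k => Bstar j k) _.
    have := rn_opp (u := fun k => Delta j k) (v := fun k => - Delta j k) (fun k => erefl).
    rewrite /rownorm /rn => ->; (have : forall k, Bstar j k = Bhat j k + - Delta j k by move=> k; rewrite hDe; ring) => hh /(_ hh).
    lra.
  have h0 : rownorm Bstar j = 0.
    by move: hj; rewrite /S /row_support inE => /negbT; rewrite negbK => /eqP.
  have hz := rn_eq0 h0.
  have hq : forall k, Delta j k = Bhat j k by move=> k; rewrite hDe hz subr0.
  rewrite h0.
  have := rn_eq (u := fun k => Delta j k) (v := fun k => Bhat j k) hq.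
  rewrite /rownorm /rn => ->.
  lra.
have key4 := norm21_split S Delta.
have part1 : norm21 (rowrestr (~: S) Delta) <= 3 * norm21 (rowrestr S Delta).
  set a := norm21 (rowrestr (~: S) Delta) in key3 key4 *.
  set b := norm21 (rowrestr S Delta) in key3 key4 *.
  have : lam * (a - b) <= lam * ((a + b) / 2).
    rewrite key4 in key2.
    have : lam * (a - b) <= lam * norm21 Bhat - lam * norm21 Bstar.
      by rewrite -mulrBr ler_wpM2l // ltW.
    lra.
  rewrite ler_pM2l //; lra.
split => //.
move=> s alpha hs hSs ha Psi hdiag hoff.
set D := norm2inf Delta. set P := norm2inf (Psi *m Delta). set N1 := norm21 Delta.
set c := (7 * alpha * s%:R)^-1.
have a_gt0 : 0 < alpha by lra.
have s_gt0 : (0 : R) < s%:R by rewrite ltr0n.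
have c_ge0 : 0 <= c by rewrite invr_ge0; apply: mulr_ge0; [apply: mulr_ge0|]; lra.
have D_ge0 : 0 <= D := norm2inf_ge0 Delta.
have P_ge0 : 0 <= P := norm2inf_ge0 (Psi *m Delta).
have N1_ge0 : 0 <= N1 by apply: sumr_ge0 => j _; apply: sqrtr_ge0.
have hN1 : N1 <= 4 * norm21 (rowrestr S Delta) by rewrite /N1 key4; lra.
have hSD : norm21 (rowrestr S Delta) <= s%:R * D.
  rewrite /norm21.
  under eq_bigr do rewrite rownorm_restr.
  apply: (@le_trans _ _ (\sum_j (if j \in S then D else 0))).
    apply: ler_sum => j _; case: ifP => // _; exact: le_norm2inf.
  rewrite -big_mkcond /= sumr_const -[D *+ _]mulr_natl; apply: ler_wpM2r => //.
  by rewrite ler_nat.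
have hrow : forall j, rownorm Delta j <= P + c * N1.
  move=> j.
  set u := fun k => Delta j k.
  have eip : ip u (fun k => (Psi *m Delta) j k) =
      \sum_j' Psi j j' * ip u (fun k => Delta j' k).
    rewrite /ip. under eq_bigr do rewrite mxE mulr_sumr.
    rewrite exchange_big /=; apply: eq_bigr => j' _.
    rewrite mulr_sumr; apply: eq_bigr => k _; ring.
  rewrite (bigD1 j) //= hdiag mul1r in eip.
  have hsq : rn u ^+ 2 = ip u u by rewrite rn_sq /ip; apply: eq_bigr => k _; rewrite expr2.
  have h1 : ip u (fun k => (Psi *m Delta) j k) <= rn u * P.
    apply: le_trans; first exact: ip_le.
    apply: ler_wpM2l; first exact: rn_ge0.
    exact: le_norm2inf.
  have h2 : - (\sum_(j' | j' != j) Psi j j' * ip u (fun k => Delta j' k)) <= rn u * (c * N1).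
    apply: (@le_trans _ _ `|\sum_(j' | j' != j) Psi j j' * ip u (fun k => Delta j' k)|).
      by rewrite -normrN ler_norm.
    apply: le_trans; first exact: ler_norm_sum.
    apply: (@le_trans _ _ (\sum_(j' | j' != j) c * (rn u * rownorm Delta j'))).
      apply: ler_sum => j' hj'; rewrite normrM.
      apply: ler_pM; [exact: normr_ge0 | exact: normr_ge0 | exact: hoff | exact: ip_abs].
    have e2 : \sum_j' c * (rn u * rownorm Delta j') = rn u * (c * N1).
      by rewrite /N1 /norm21 !mulr_sumr; apply: eq_bigr => j' _; ring.
    have t0 : 0 <= c * (rn u * rownorm Delta j).
      by apply: mulr_ge0 => //; apply: mulr_ge0; [exact: rn_ge0 | exact: sqrtr_ge0].
    rewrite -e2 [X in _ <= X](bigD1 j) //=; lra.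
  have hm : rn u * rn u <= rn u * (P + c * N1).
    rewrite -expr2 hsq; lra.
  change (rn u <= P + c * N1).
  have [h0|hpos] := eqVneq (rn u) 0.
    by rewrite h0; apply: addr_ge0 => //; apply: mulr_ge0.
  have hp : 0 < rn u by rewrite lt0r hpos rn_ge0.
  by rewrite ler_pM2l in hm.
have hD : D <= P + c * N1.
  apply: norm2inf_le => //; apply: addr_ge0 => //; by apply: mulr_ge0.
have hcN : c * N1 <= 4 / (7 * alpha) * D.
  apply: (@le_trans _ _ (c * (4 * (s%:R * D)))).
    by apply: ler_wpM2l => //; lra.
  rewrite le_eqVlt; apply/orP; left; apply/eqP.
  rewrite /c; field.
  by apply/andP; split; [rewrite gt_eqF | rewrite gt_eqF].
have h7 : (7 * alpha - 4) * D <= 7 * alpha * P.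
  have : 7 * alpha * D <= 7 * alpha * (P + 4 / (7 * alpha) * D).
    apply: ler_wpM2l; first lra.
    by apply: le_trans hD _; rewrite lerD2l.
  have -> : 7 * alpha * (P + 4 / (7 * alpha) * D) = 7 * alpha * P + 4 * D.
    by field; rewrite gt_eqF.
  lra.
have -> : 1 + 16 / (7 * (alpha - 1)) = (7 * alpha + 9) / (7 * (alpha - 1)).
  by field; rewrite subr_eq0 gt_eqF.
rewrite mulrAC ler_pdivlMr; last lra.
nra.
Qed.
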